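(* For integers $0\le\ell\le 2n$ and $m\ge0$, let $p_{\ell,m,2n}$ be the weighted number of paths from $(\ell,m)$ to $(2n,0)$. Then \[ \frac{p_{\ell,j,2n}}{j+1}\ge\frac{p_{\ell,k,2n}}{k+1} \] for all integers $0\le j<k\le\ell\le 2n$ with $k-j$ even.
   Context: Paths here use up steps $U=(1,1)$ and down steps $D=(1,-1)$ and never go below $y=0$. An up step starting at $(a,b)$ has weight $(a-b+2)/(a+b+2)$; the weight of a path is the product of the weights of its up steps, and $p_{\ell,m,2n}$ is the sum of the weights of all such paths from $(\ell,m)$ to $(2n,0)$. Equivalently, $p_{2n,m,2n}=\delta_{m,0}$, $p_{\ell,-1,2n}=0$, and $p_{\ell,m,2n}=p_{\ell+1,m-1,2n}+\frac{\ell-m+2}{\ell+m+2}p_{\ell+1,m+1,2n}$ for $\ell<2n$, $m\ge0$. *)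

(* Defs.v *)
From mathcomp Require Import all_boot all_order all_algebra.
Set Implicit Arguments. Unset Strict Implicit. Unset Printing Implicit Defensive.
Import Order.TTheory GRing.Theory Num.Theory.
Local Open Scope ring_scope.

Definition upw (a b : nat) : rat :=
  ((Posz a - Posz b + 2)%:~R) / ((a + b + 2)%N%:R).

(* pathsum r l m : weighted number of paths from (l,m) to (l+r,0),
   by recursion on the number r of remaining steps. *)
Fixpoint pathsum (r l m : nat) : rat :=
  match r with
  | 0 => if m == 0%N then 1 else 0
  | r'.+1 =>
      (if m is m'.+1 then pathsum r' l.+1 m' else 0)
      + upw l m * pathsum r' l.+1 m.+1
  end.

Definition p (l m N : nat) : rat := pathsum (N - l) l m.

(* Main.v *)
Set Warnings "-notation-overridden -ambiguous-paths".
Require Import Defs.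
From mathcomp Require Import all_boot all_order all_algebra.
From mathcomp Require Import ring lra zify.
Import Order.TTheory GRing.Theory Num.Theory.
Local Open Scope ring_scope.

Lemma alg (M S x2 x3 : rat) : 0<=M -> 0<=S -> 0<=x3 -> x3<=x2 ->
 ((M+2)*x2 + (S+2)/(2*M+S+6)*((M+4)*x3))/(M+3) <=
 (M*x2 + (S+4)/(2*M+S+4)*((M+2)*x2))/(M+1).
Proof.
move=> hM hS h3 h32; rewrite -subr_ge0.
have -> : (M*x2 + (S+4)/(2*M+S+4)*((M+2)*x2))/(M+1) -
  ((M+2)*x2 + (S+2)/(2*M+S+6)*((M+4)*x3))/(M+3) =
  ((2*M+S+6)*(4*(M+2)^+2+S*(M+1)*(M+4))*(x2-x3) +
   4*((M+3+S)*(M+1)*(M+3)+3*M+S+7)*x3) /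
  ((M+1)*(M+3)*(2*M+S+4)*(2*M+S+6)).
  by field; rewrite !gt_eqF //; lra.
by do ![ lra | apply: mulr_ge0 | apply: addr_ge0 | apply: exprn_ge0 | apply: divr_ge0 | rewrite invr_ge0].
Qed.

Lemma alg2 (M S Y1 X2 X3 : rat) : 0<=M -> 0<=S -> 0<=X3 ->
  X3/(M+4) <= X2/(M+2) -> M*(X2/(M+2)) <= Y1 ->
  (X2 + (S+2)/(2*M+S+6) * X3)/(M+3) <= (Y1 + (S+4)/(2*M+S+4) * X2)/(M+1).
Proof.
move=> hM hS h3 h32 hY.
have n2 : M + 2 != 0 by rewrite gt_eqF //; lra.
have n4 : M + 4 != 0 by rewrite gt_eqF //; lra.
have e2 : X2 = (M+2) * (X2/(M+2)) by rewrite mulrC divfK.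
have e3 : X3 = (M+4) * (X3/(M+4)) by rewrite mulrC divfK.
set x2 := X2/(M+2) in e2 h32 hY *; set x3 := X3/(M+4) in e3 h32 *.
apply: (le_trans (_ : _ <= (M*x2 + (S+4)/(2*M+S+4) * X2)/(M+1))); last first.
  apply: ler_wpM2r; [rewrite invr_ge0; lra | exact: lerD hY (lexx _)].
rewrite {1 2}e2 e3; apply: alg => //.
by rewrite /x3 divr_ge0 //; lra.
Qed.

Lemma upw_val a b : (b <= a.+2)%N -> upw a b = (a.+2 - b)%:R / (a+b+2)%:R.
Proof.
move=> h; rewrite /upw; congr (_ / _).
have -> : (Posz a - Posz b + 2 = Posz (a.+2 - b))%R by lia.
by [].
Qed.

Lemma ps_ge0 r : forall l m, (m <= l.+2)%N -> 0 <= pathsum r l m.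
Proof.
elim: r => [|r IH] l m hm /=; first by case: (m == 0%N).
apply: addr_ge0.
  by case: m hm => [|m] hm //; apply: IH; lia.
apply: mulr_ge0; last by apply: IH; lia.
rewrite upw_val //; apply: divr_ge0; exact: ler0n.
Qed.

Lemma pathsumS r l m : pathsum r.+1 l m =
  (if m is m'.+1 then pathsum r l.+1 m' else 0) + upw l m * pathsum r l.+1 m.+1.
Proof. by []. Qed.

Lemma mainl r : forall l m, (m.+2 <= l)%N ->
  pathsum r l m.+2 / m.+3%:R <= pathsum r l m / m.+1%:R.
Proof.
elim: r => [|r IH] l m hl.
  rewrite /= mul0r; case: (m == 0%N); rewrite ?mul0r ?mul1r ?invr_ge0 //.
have [s ->] : exists s, l = (m.+2 + s)%N by exists (l - m.+2)%N; lia.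
have hX3 : 0 <= pathsum r (m.+2 + s).+1 m.+3 by apply: ps_ge0; lia.
have h32 := IH (m.+2 + s).+1 m.+1 ltac:(lia).
have hY : m%:R * (pathsum r (m.+2 + s).+1 m.+1 / m.+2%:R) <=
   (if m is m'.+1 then pathsum r (m.+2 + s).+1 m' else 0).
  case: m hl hX3 h32 => [|m'] hl hX3 h32; first by rewrite mul0r.
  have h := IH (m'.+3 + s).+1 m' ltac:(lia).
  apply: le_trans (ler_wpM2l (ler0n _ _) h) _.
  by rewrite mulrC divfK // pnatr_eq0.
have eN k : (m + k)%:R = m%:R + k%:R :> rat by rewrite natrD.
have u1 : upw (m.+2 + s) m.+2 = (s%:R+2)/(2 * m%:R+s%:R+6).
  rewrite upw_val; last by lia.
  have -> : ((m.+2 + s).+2 - m.+2 = s + 2)%N by lia.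
  have -> : (m.+2 + s + m.+2 + 2 = 2 * m + s + 6)%N by lia.
  by rewrite !natrD; congr (_ / (_ + _ + _)); ring.
have u0 : upw (m.+2 + s) m = (s%:R+4)/(2 * m%:R+s%:R+4).
  rewrite upw_val; last by lia.
  have -> : ((m.+2 + s).+2 - m = s + 4)%N by lia.
  have -> : (m.+2 + s + m + 2 = 2 * m + s + 4)%N by lia.
  by rewrite !natrD; congr (_ / (_ + _ + _)); ring.
rewrite !pathsumS u1 u0.
have e1 : m.+1%:R = m%:R + 1 :> rat by rewrite -[m.+1]addn1 natrD.
have e2 : m.+2%:R = m%:R + 2 :> rat by rewrite -[m.+2]addn2 natrD.
have e3 : m.+3%:R = m%:R + 3 :> rat by rewrite -[m.+3]addn3 natrD.
have e4 : m.+4%:R = m%:R + 4 :> rat by rewrite -[m.+4]addn4 natrD.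
rewrite e1 e3; rewrite e2 e4 in h32; rewrite e2 in hY.
by apply: alg2 => //; exact: ler0n.
Qed.

Lemma chain r l j t : (j + 2*t <= l)%N ->
  pathsum r l (j + 2*t) / (j + 2*t).+1%:R <= pathsum r l j / j.+1%:R.
Proof.
elim: t => [|t IH] h; first by rewrite muln0 addn0.
have -> : (j + 2 * t.+1 = (j + 2 * t).+2)%N by lia.
apply: (le_trans (mainl r l (j + 2 * t) _)) (IH _); lia.
Qed.

Theorem lemma4p5 (n l j k : nat) :
  (j < k)%N -> (k <= l)%N -> (l <= 2 * n)%N -> ~~ odd (k - j) ->
  p l k (2 * n) / (k.+1)%:R <= p l j (2 * n) / (j.+1)%:R.
Proof.
move=> hjk hkl hln hodd.
have := odd_double_half (k - j); rewrite (negbTE hodd) add0n -muln2 => h.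
have -> : k = (j + 2 * (k - j)./2)%N by lia.
rewrite /p; apply: chain; lia.
Qed.
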